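(* Let $\delta\in\mathbb{F}_{5^8}^*$ with $\delta\neq\pm1$ and multiplicative order of $\delta$ dividing $4$. Then $S(x)=x^5+\delta x^{5^5}\in\mathbb{F}_{5^8}[x]$ is a scattered polynomial of index $0$ over $\mathbb{F}_{5^8}$ (with $q=5$).
   Context: An $\mathbb{F}_q$-linearized polynomial $S\in\mathbb{F}_{q^n}[x]$ is a scattered polynomial of index $t$ over $\mathbb{F}_{q^n}$ if for all $y,z\in\mathbb{F}_{q^n}^*$, $\frac{S(y)}{y^{q^t}}=\frac{S(z)}{z^{q^t}}$ implies $y/z\in\mathbb{F}_q$. *)

(* Defs.v *)
From HB Require Import structures.
From mathcomp Require Import all_boot all_order all_algebra all_field.
Set Implicit Arguments. Unset Strict Implicit. Unset Printing Implicit Defensive.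
Import GRing.Theory.
Local Open Scope ring_scope.

Definition in_Fq (F : finFieldType) (q : nat) (x : F) : bool := x ^+ q == x.

Definition linearized (F : finFieldType) (q : nat) (S : {poly F}) : Prop :=
  forall i : nat, S`_i != 0 -> exists k : nat, i = (q ^ k)%N.

Definition scattered (F : finFieldType) (q t : nat) (S : {poly F}) : Prop :=
  linearized q S /\
  forall y z : F, y != 0 -> z != 0 ->
    S.[y] / y ^+ (q ^ t) = S.[z] / z ^+ (q ^ t) -> in_Fq q (y / z).

(* Main.v *)
Require Import Defs.
From HB Require Import structures.
From mathcomp Require Import all_boot all_order all_algebra all_field.
From mathcomp Require Import all_fingroup all_solvable.
From mathcomp Require Import ring.
Import GRing.Theory.

Notation M := (nat * nat * nat * nat)%type.
Definition nrm (a b c d : nat) : M := (a %% 5, b %% 5, c %% 5, d %% 5).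
Definition mulM (X Y : M) : M :=
  let '(a0,a1,a2,a3) := X in let '(b0,b1,b2,b3) := Y in
  nrm (a0*b0 + (a1*b3 + a2*b2 + a3*b1)*2) (a0*b1 + a1*b0 + (a2*b3 + a3*b2)*2)
      (a0*b2 + a1*b1 + a2*b0 + (a3*b3)*2) (a0*b3 + a1*b2 + a2*b1 + a3*b0).
Definition addM (X Y : M) : M :=
  let '(a0,a1,a2,a3) := X in let '(b0,b1,b2,b3) := Y in
  nrm (a0+b0) (a1+b1) (a2+b2) (a3+b3).
Definition subM (X Y : M) : M :=
  let '(a0,a1,a2,a3) := X in let '(b0,b1,b2,b3) := Y in
  nrm (a0+b0*4) (a1+b1*4) (a2+b2*4) (a3+b3*4).
Definition zeroM : M := (0,0,0,0).
Definition oneM : M := (1,0,0,0).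
Definition m1M : M := (4,0,0,0).
Definition powM (X : M) n := iter n (mulM X) oneM.
Definition i5 := iota 0 5.
Definition allM : seq M := flatten (map (fun a => flatten (map (fun b => flatten (map (fun c => map (fun d => (a,b,c,d)) i5) i5)) i5)) i5).

Definition sqi k (X : M) : M := iter k (fun Y => mulM Y Y) X.
Definition p624 X := mulM (sqi 4 X) (mulM (sqi 5 X) (mulM (sqi 6 X) (sqi 9 X))).
Definition p312 X := mulM (sqi 3 X) (mulM (sqi 4 X) (mulM (sqi 5 X) (sqi 8 X))).
Definition bnd (X : M) : bool := let '(a,b,c,d) := X in [&& a < 5, b < 5, c < 5 & d < 5].
Definition enc (X : M) : nat := let '(a,b,c,d) := X in a * 125 + b * 25 + c * 5 + d.
Definition ltM (X Y : M) : bool := enc X < enc Y.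

Definition check1 := all (fun X => (X == zeroM) || (p624 X == oneM)) allM.
Definition checkB := all bnd allM.
Definition checkS := sorted ltM allM.
Definition checkC := all (fun x => all (fun y => ((x + y * 4) %% 5 != 0) || (x == y)) i5) i5.
Definition checkW := all (fun P => (subM P (powM P 5)).1.1.1 == 0) allM.
Definition check3 :=
  let L := [seq mulM T T | T <- [seq T <- allM | T.1.1.1 == 0]] in
  all (fun C => (p312 C != m1M) || let w := addM C (powM C 5) in all (fun v => v != w) L) allM.

Lemma check1_ok : check1 = true. Proof. vm_compute. reflexivity. Qed.
Lemma checkB_ok : checkB = true. Proof. vm_compute. reflexivity. Qed.
Lemma checkS_ok : checkS = true. Proof. vm_compute. reflexivity. Qed.
Lemma checkC_ok : checkC = true. Proof. vm_compute. reflexivity. Qed.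
Lemma checkW_ok : checkW = true. Proof. vm_compute. reflexivity. Qed.
Lemma check3_ok : check3 = true. Proof. vm_compute. reflexivity. Qed.

Lemma allM_uniq : uniq allM.
Proof.
apply: (@sorted_uniq _ ltM); last exact: checkS_ok.
  by move=> x y z; apply: ltn_trans.
by move=> x; apply: ltnn.
Qed.

Lemma coord_eq x y : x < 5 -> y < 5 -> (x + y * 4) %% 5 = 0 -> x = y.
Proof.
move=> hx hy h; have := checkC_ok; rewrite /checkC => /allP /(_ x).
rewrite mem_iota hx => /(_ isT) /allP /(_ y); rewrite mem_iota hy => /(_ isT).
by rewrite h eqxx /= => /eqP.
Qed.

Lemma subM_eq0 X Y : X \in allM -> Y \in allM -> subM X Y = zeroM -> X = Y.
Proof.
move=> hX hY; have := checkB_ok; rewrite /checkB => /allP hb.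
move: (hb X hX) (hb Y hY).
case: X {hX} => [[[a0 a1] a2] a3]; case: Y {hY} => [[[b0 b1] b2] b3] /=.
move=> /and4P[x0 x1 x2 x3] /and4P[y0 y1 y2 y3] [e0 e1 e2 e3].
by rewrite (coord_eq _ _ x0 y0 e0) (coord_eq _ _ x1 y1 e1) (coord_eq _ _ x2 y2 e2) (coord_eq _ _ x3 y3 e3).
Qed.

Lemma allM_nrm a b c d : nrm a b c d \in allM.
Proof.
have H x : x %% 5 \in i5 by rewrite mem_iota ltn_mod.
apply/flattenP; exists (flatten (map (fun b => flatten (map (fun c => map (fun d => (a %% 5,b,c,d)) i5) i5)) i5)); first exact: (map_f _ (H a)).
apply/flattenP; exists (flatten (map (fun c => map (fun d => (a %% 5,b %% 5,c,d)) i5) i5)); first exact: (map_f _ (H b)).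
apply/flattenP; exists (map (fun d => (a %% 5,b %% 5,c %% 5,d)) i5); first exact: (map_f _ (H c)).
exact: (map_f _ (H d)).
Qed.

Lemma mulM_in X Y : mulM X Y \in allM.
Proof. by case: X => [[[? ?] ?] ?]; case: Y => [[[? ?] ?] ?]; apply: allM_nrm. Qed.
Lemma subM_in X Y : subM X Y \in allM.
Proof. by case: X => [[[? ?] ?] ?]; case: Y => [[[? ?] ?] ?]; apply: allM_nrm. Qed.
Lemma addM_in X Y : addM X Y \in allM.
Proof. by case: X => [[[? ?] ?] ?]; case: Y => [[[? ?] ?] ?]; apply: allM_nrm. Qed.
Lemma powM_in X n : powM X n.+1 \in allM.
Proof. exact: mulM_in. Qed.

Section Ev.
Local Open Scope ring_scope.
Variables (F : fieldType) (r : F).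
Hypothesis h5 : (5%:R : F) = 0.
Hypothesis hr : r ^+ 4 = 2%:R.

Definition ev (X : M) : F :=
  let '(a,b,c,d) := X in a%:R + b%:R * r + c%:R * r ^+ 2 + d%:R * r ^+ 3.

Lemma evE a b c d : ev (a,b,c,d) = a%:R + b%:R * r + c%:R * r ^+ 2 + d%:R * r ^+ 3.
Proof. by []. Qed.

Lemma natmod n : (n %% 5)%:R = n%:R :> F.
Proof. by rewrite {2}(divn_eq n 5) natrD natrM h5 mulr0 add0r. Qed.

Lemma ev_nrm a b c d : ev (nrm a b c d) = a%:R + b%:R * r + c%:R * r ^+ 2 + d%:R * r ^+ 3.
Proof. by rewrite /= !natmod. Qed.

Lemma four : (4%:R : F) = -1.
Proof. by apply/eqP; rewrite -subr_eq0 opprK -(natrD F 4 1) h5. Qed.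

Lemma ev_mul X Y : ev (mulM X Y) = ev X * ev Y.
Proof.
case: X => [[[a0 a1] a2] a3]; case: Y => [[[b0 b1] b2] b3].
have -> : mulM (a0,a1,a2,a3) (b0,b1,b2,b3) = nrm (a0*b0 + (a1*b3 + a2*b2 + a3*b1)*2) (a0*b1 + a1*b0 + (a2*b3 + a3*b2)*2)
      (a0*b2 + a1*b1 + a2*b0 + (a3*b3)*2) (a0*b3 + a1*b2 + a2*b1 + a3*b0) by [].
rewrite ev_nrm !evE !natrD !natrM. rewrite -hr. ring.
Qed.

Lemma ev_add X Y : ev (addM X Y) = ev X + ev Y.
Proof.
case: X => [[[a0 a1] a2] a3]; case: Y => [[[b0 b1] b2] b3].
rewrite /addM ev_nrm /= !natrD. ring.
Qed.

Lemma ev_sub X Y : ev (subM X Y) = ev X - ev Y.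
Proof.
case: X => [[[a0 a1] a2] a3]; case: Y => [[[b0 b1] b2] b3].
rewrite /subM ev_nrm /= !natrD !natrM four. ring.
Qed.

Lemma ev_one : ev oneM = 1.
Proof. rewrite /=. ring. Qed.
Lemma ev_zero : ev zeroM = 0.
Proof. rewrite /=. ring. Qed.
Lemma ev_m1 : ev m1M = -1.
Proof. rewrite /= four. ring. Qed.

Lemma ev_pow X n : ev (powM X n) = ev X ^+ n.
Proof.
elim: n => [|n IH]; first by rewrite ev_one expr0.
by rewrite /powM iterS -/(powM X n) ev_mul IH exprS.
Qed.

Lemma ev_sqi k X : ev (sqi k X) = ev X ^+ (2 ^ k).
Proof.
elim: k => [|k IH]; first by rewrite expr1.
by rewrite /sqi iterS -/(sqi k X) ev_mul IH -expr2 -exprM expnSr.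
Qed.

Lemma ev_p624 X : ev (p624 X) = ev X ^+ 624.
Proof. by rewrite /p624 (ev_mul (sqi 4 X)) (ev_mul (sqi 5 X)) (ev_mul (sqi 6 X)) !ev_sqi -!exprD. Qed.

Lemma ev_p312 X : ev (p312 X) = ev X ^+ 312.
Proof. by rewrite /p312 (ev_mul (sqi 3 X)) (ev_mul (sqi 4 X)) (ev_mul (sqi 5 X)) !ev_sqi -!exprD. Qed.

Lemma ev_eq0 X : X \in allM -> ev X = 0 -> X = zeroM.
Proof.
move=> hX e; have := check1_ok; rewrite /check1 => /allP /(_ X hX) /orP[/eqP //|/eqP hp].
have := ev_p624 X; rewrite hp ev_one e expr0n /= => /eqP; rewrite oner_eq0.
by [].
Qed.

Lemma ev_inj X Y : X \in allM -> Y \in allM -> ev X = ev Y -> X = Y.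
Proof.
move=> hX hY e.
have z : subM X Y = zeroM by apply: ev_eq0; [exact: subM_in | rewrite ev_sub e subrr].
exact: subM_eq0 z.
Qed.

Lemma ev_frob X : X \in allM -> ev X ^+ 625 = ev X.
Proof.
move=> hX; have := check1_ok; rewrite /check1 => /allP /(_ X hX) /orP[/eqP ->|/eqP hp].
  by rewrite ev_zero expr0n.
by rewrite (exprS _ 624) -ev_p624 hp ev_one mulr1.
Qed.

Lemma size_allM : size allM = 625%N. Proof. by vm_compute. Qed.

Lemma cover x : x ^+ 625 = x -> exists2 X, X \in allM & x = ev X.
Proof.
move=> hx; apply/mapP; apply/negPn/negP => nx.
have u : uniq (x :: map ev allM).
  by rewrite cons_uniq nx (map_inj_in_uniq ev_inj) allM_uniq.
have sp : size ('X^625 - 'X : {poly F}) = 626%N.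
  by rewrite size_addl ?size_polyXn ?size_opp ?size_polyX.
have p0 : ('X^625 - 'X : {poly F}) != 0 by rewrite -size_poly_eq0 sp.
have ar : all (root ('X^625 - 'X)) (x :: map ev allM).
  apply/allP => y; rewrite inE => /orP[/eqP ->|/mapP[X hX ->]].
    by rewrite /root !hornerE hx subrr.
  by rewrite /root !hornerE ev_frob // subrr.
have := max_poly_roots p0 ar u.
rewrite sp (lock allM) /= size_map -lock size_allM. by [].
Qed.


Lemma kfact (p c : F) : p ^+ 625 = p -> c ^+ 312 = -1 -> (p - p ^+ 5) ^+ 2 = c + c ^+ 5 -> False.
Proof.
move=> hp hc e.
have hc' : c ^+ 625 = c.
  by rewrite (exprS _ 624) (_ : 624 = 312 * 2)%N // exprM hc sqrrN expr1n mulr1.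
have [P hP eP] := cover _ hp; have [C hC eC] := cover _ hc'.
rewrite eP eC in e; rewrite eC in hc.
have e1 : p312 C = m1M.
  apply: ev_inj; [exact: mulM_in | exact: (allM_nrm 4 0 0 0) | by rewrite ev_p312 ev_m1].
set W := subM P (powM P 5).
have e2 : mulM W W = addM C (powM C 5).
  apply: ev_inj; [exact: mulM_in | exact: addM_in |].
  by rewrite ev_mul ev_add ev_sub !ev_pow -expr2.
have := check3_ok; rewrite /check3 => /allP /(_ C hC) /orP[/negP[]|]; first by rewrite e1.
have hW : W \in [seq T <- allM | T.1.1.1 == 0].
  rewrite mem_filter subM_in andbT.
  by have := checkW_ok; rewrite /checkW => /allP /(_ P hP).
move=> /allP /(_ (mulM W W)) H; move: (H (map_f (fun T => mulM T T) hW)).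
by rewrite e2 eqxx.
Qed.

End Ev.

Local Open Scope ring_scope.

Lemma root16 (F : finFieldType) (hF : #|F| = (5^8)%N) :
  exists r : F, r^+16 = 1 /\ r^+8 != 1.
Proof.
have /cyclicP[g Hg] := field_unit_group_cyclic [set: {unit F}]%G.
have og : (#[g] = (5^8).-1)%g.
  rewrite /order -Hg card_finField_unit hF. reflexivity.
have d16 : (16 %| #[g]%g)%N.
  rewrite og -subn1 -eqn_mod_dvd; last by rewrite expn_gt0.
  by rewrite (expnM 5 2 4) -modnXm.
clear og Hg.
have gt0 : (0 < #[g]%g)%N by apply: order_gt0.
set t := (#[g]%g %/ 16)%N.
have et : (#[g]%g = t * 16)%N by rewrite divnK.
have tp : (0 < t)%N by move: gt0; rewrite et muln_gt0 => /andP[].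
have oh : (#[(g ^+ t)%g]%g = 16)%N.
  by rewrite orderXdiv et ?dvdn_mulr // mulKn.
set h := (g ^+ t)%g in oh.
exists (FinRing.uval h); split.
  by rewrite -FinRing.val_unitX -oh expg_order FinRing.val_unit1.
rewrite -FinRing.val_unitX; apply/eqP => E.
have : (h ^+ 8 == 1)%g by apply/eqP; apply: val_inj; rewrite E FinRing.val_unit1.
by rewrite -order_dvdn oh.
Qed.

Theorem mainTheorem12 (F : finFieldType) (hF : #|F| = (5 ^ 8)%N) (delta : F) :
  delta != 0 -> delta != 1 -> delta != -1 -> delta ^+ 4 = 1 ->
  scattered 5 0 ('X^5 + delta *: 'X^(5 ^ 5)).
Proof.
move=> d0 d1 dm1 d4.
have pc : 5%N \in [char F] by apply: (card_finPcharP hF).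
have h5 : (5%:R : F) = 0 := pcharf0 pc.
have [r hr] : exists r : F, r ^+ 4 = 2%:R.
  have [r0 [r16 r8]] := root16 _ hF.
  have h8 : r0 ^+ 8 = -1.
    have : (r0 ^+ 8 - 1) * (r0 ^+ 8 + 1) = 0.
      have -> : (r0 ^+ 8 - 1) * (r0 ^+ 8 + 1) = r0 ^+ 16 - 1 by ring.
      by rewrite r16 subrr.
    move/eqP; rewrite mulf_eq0 subr_eq0 (negbTE r8) orFb addr_eq0 => /eqP //.
  have : (r0 ^+ 4 - 2%:R) * (r0 ^+ 4 + 2%:R) = 0.
    have -> : (r0 ^+ 4 - 2%:R) * (r0 ^+ 4 + 2%:R) = r0 ^+ 8 + 1 - 5%:R by ring.
    by rewrite h8 h5 addNr subr0.
  move/eqP; rewrite mulf_eq0 => /orP[]; rewrite ?subr_eq0 ?addr_eq0 => /eqP h.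
    by exists r0.
  exists (r0 ^+ 3); rewrite exprAC h.
  have -> : (- 2%:R : F) ^+ 3 = 2%:R - 2%:R * 5%:R by ring.
  by rewrite h5 mulr0 subr0.
have nat5 (n : nat) : ([char F]).-nat (5 ^ n)%N by rewrite pnatX (pnatE _ (isT : prime 5)) pc.
have fr (n : nat) (x y : F) : (x + y) ^+ (5 ^ n)%N = x ^+ (5 ^ n)%N + y ^+ (5 ^ n)%N := exprDn_pchar x y (nat5 n).
have frN (n : nat) (x : F) : (- x) ^+ (5 ^ n)%N = - x ^+ (5 ^ n)%N.
  by rewrite exprNn -signr_odd oddX orbT expr1 mulN1r.
have fr5 (x y : F) : (x + y) ^+ 5 = x ^+ 5 + y ^+ 5 := fr 1%N x y.
have fr5N (x : F) : (- x) ^+ 5 = - x ^+ 5 := frN 1%N x.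
have frb (x y : F) : (x + y) ^+ 625 = x ^+ 625 + y ^+ 625 := fr 4%N x y.
have frbN (x : F) : (- x) ^+ 625 = - x ^+ 625 := frN 4%N x.
have bb0 (x : F) : (x ^+ (5 ^ 4)%N) ^+ (5 ^ 4)%N = x.
  by rewrite -exprM -expnD -hF expf_card.
have bb (x : F) : (x ^+ 625) ^+ 625 = x := bb0 x.
have two0 : (2%:R : F) != 0.
  apply/eqP => t; move: h5; rewrite (_ : 5 = 2 * 2 + 1)%N // natrD natrM t mul0r add0r.
  by move/eqP; rewrite oner_eq0.
have dd : delta ^+ 2 = -1.
  have : (delta ^+ 2 - 1) * (delta ^+ 2 + 1) = 0.
    have -> : (delta ^+ 2 - 1) * (delta ^+ 2 + 1) = delta ^+ 4 - 1 by ring.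
    by rewrite d4 subrr.
  move/eqP; rewrite mulf_eq0 => /orP[|/eqP]; last by move/eqP; rewrite addr_eq0 => /eqP.
  have -> : delta ^+ 2 - 1 = (delta - 1) * (delta + 1) by ring.
  rewrite mulf_eq0 => /orP[]; rewrite ?subr_eq0 ?addr_eq0 => /eqP h.
    by move: d1; rewrite h eqxx.
  by move: dm1; rewrite h eqxx.
have db : delta ^+ 625 = delta.
  by rewrite (_ : 625 = 4 * 156 + 1)%N // exprD exprM d4 expr1n mul1r expr1.
split.
  move=> i; rewrite coefD coefZ !coefXn.
  have [->|n5] := eqVneq i 5%N; first by exists 1%N.
  have [->|n55] := eqVneq i (5 ^ 5)%N; first by exists 5%N.
  by rewrite mulr0 addr0 eqxx.
move=> y z y0 z0; rewrite expn0 !expr1 !hornerD !hornerZ !hornerXn => H.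
have d5 : delta ^+ 5 = delta by rewrite exprS d4 mulr1.
have U5 (w : F) : (w + delta * w ^+ 625) ^+ 5 = w ^+ 5 + delta * w ^+ (5 ^ 5)%N.
  by rewrite fr5 exprMn d5 (expnSr 5 4) exprM.
have bU (w : F) : (w + delta * w ^+ 625) ^+ 625 = w ^+ 625 + delta * w.
  by rewrite frb exprMn db bb.
have bM (a b : F) : (a * b) ^+ 625 = a ^+ 625 * b ^+ 625 by rewrite exprMn.
have b5 (x : F) : (x ^+ 5) ^+ 625 = (x ^+ 625) ^+ 5 by rewrite exprAC.
rewrite -!U5 in H.
have u0 : z + delta * z ^+ 625 != 0.
  apply/eqP => hu.
  have := bU z; rewrite hu exprS mul0r => /esym hub.
  have : 2%:R * z = 0.
    have -> : 2%:R * z = (z + delta * z ^+ 625) - delta * (z ^+ 625 + delta * z)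
        + (delta ^+ 2 + 1) * z by ring.
    by rewrite hu hub dd; ring.
  by move/eqP; rewrite mulf_eq0 (negbTE two0) (negbTE z0).
have [m hm5 emu] : exists2 m : F, m ^+ 5 = y / z &
    m * (z + delta * z ^+ 625) = y + delta * y ^+ 625.
  exists ((y + delta * y ^+ 625) / (z + delta * z ^+ 625)); last by rewrite divfK.
  rewrite expr_div_n; apply/eqP; rewrite eqr_div ?expf_neq0 //.
  move/eqP: H; rewrite eqr_div // => /eqP ->.
  by rewrite mulrC.
clear H.
have ey : y = m ^+ 5 * z by rewrite hm5 divfK.
rewrite ey bM b5 in emu.
have emub : (m * (z + delta * z ^+ 625)) ^+ 625 =
    (m ^+ 5 * z + delta * (m ^+ 625 ^+ 5 * z ^+ 625)) ^+ 625.
  rewrite emu; reflexivity.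
rewrite (bM m) bU frb (bM (m ^+ 5)) (bM delta) (bM (m ^+ 625 ^+ 5)) db bb in emub.
rewrite (b5 m) (b5 (m ^+ 625)) bb in emub.
have bp : (m + m ^+ 625) ^+ 625 = m + m ^+ 625 by rewrite frb bb addrC.
have bq : (m - m ^+ 625) ^+ 625 = - (m - m ^+ 625) by rewrite frb frbN bb opprB addrC.
have zb0 : z ^+ 625 != 0 by rewrite expf_neq0.
have hmm : m ^+ 5 = m.
  move: bp bq emu emub zb0; move: (m ^+ 625) (z ^+ 625) => mb zb bp bq E1 E1b zb0.
  have K : (m - m^+5)*(mb - mb^+5) + (mb^+5 - m)*(m^+5 - mb) = 0.
    have : z * zb * ((m - m^+5)*(mb - mb^+5) + (mb^+5 - m)*(m^+5 - mb)) = 0.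
      have h1 : m * (z + delta * zb) - (m ^+ 5 * z + delta * (mb ^+ 5 * zb)) = 0
        by rewrite E1 subrr.
      have h2 : mb * (zb + delta * z) - (mb ^+ 5 * zb + delta * (m ^+ 5 * z)) = 0
        by rewrite E1b subrr.
      have h3 : delta ^+ 2 + 1 = 0 by rewrite dd addNr.
      have -> : z * zb * ((m - m^+5)*(mb - mb^+5) + (mb^+5 - m)*(m^+5 - mb)) =
        (delta ^+ 2 + 1) * (z * zb * (mb^+5 - m) * (m^+5 - mb))
        + (delta * zb * (mb^+5 - m)) * (mb * (zb + delta * z) - (mb ^+ 5 * zb + delta * (m ^+ 5 * z)))
        + (m * (z + delta * zb) - (m ^+ 5 * z + delta * (mb ^+ 5 * zb)))
          * (delta * z * (m^+5 - mb) + (mb * (zb + delta * z) - (mb ^+ 5 * zb + delta * (m ^+ 5 * z))))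
        by ring.
      by rewrite h1 h2 h3; ring.
    by move/eqP; rewrite !mulf_eq0 (negbTE z0) (negbTE zb0) /= => /eqP.
  have E : (m + mb - (m + mb) ^+ 5) ^+ 2 = (m - mb) ^+ 2 + ((m - mb) ^+ 2) ^+ 5.
    rewrite exprAC fr5 fr5 fr5N.
    apply/eqP; rewrite -subr_eq0.
    have -> : (m + mb - (m ^+ 5 + mb ^+ 5)) ^+ 2 - ((m - mb) ^+ 2 + (m ^+ 5 - mb ^+ 5) ^+ 2)
      = 2%:R * ((m - m^+5)*(mb - mb^+5) + (mb^+5 - m)*(m^+5 - mb)) by ring.
    by rewrite K mulr0.
  have [q0|q0] := eqVneq (m - mb) 0.
    move/eqP: q0; rewrite subr_eq0 => /eqP emb.
    have z2 : (0 : F) ^+ 2 = 0 by rewrite expr2 mul0r.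
    have z5 : (0 : F) ^+ 5 = 0 by rewrite exprS mul0r.
    rewrite -emb subrr z2 z5 addr0 in E.
    move/eqP: E; rewrite sqrf_eq0 subr_eq0 fr5 => /eqP E.
    apply: (mulfI two0); rewrite mulr2n mulrDl !mul1r -E; ring.
  have hq : (m - mb) ^+ 624 = -1.
    by apply: (mulfI q0); rewrite -exprS bq mulrN1.
  have hc : ((m - mb) ^+ 2) ^+ 312 = -1 by rewrite -exprM.
  by case: (kfact _ _ h5 hr _ _ bp hc E).
by rewrite /in_Fq -hm5 !hmm eqxx.
Qed.
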